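(* Let $n\ge 4$, $N=\{1,\dots,n\}$, fix distinct $i_1,i_2\in N$ and let $\hat N^c=N\setminus\{i_1,i_2\}$. Then the inequality $$\sum_{j\in\hat N^c}\left(x_{i_1j}+x_{ji_1}+x_{ji_2}\right)-x_{i_1i_2}-\sum_{j,j'\in\hat N^c:\,j\ne j'} x_{jj'}\le 3-\frac{(n-4)(n-5)}{2}$$ is a valid inequality for the weak order polytope $P^n_{WO}$, i.e. it holds for every point $x\in P^n_{WO}$.
   Context: Let $N=\{1,\dots,n\}$ and $A_N=\{(i,j): i,j\in N, i\ne j\}$. A weak order on $N$ is a binary relation $W\subseteq N\times N$ that is reflexive, transitive and total; $(i,j)\in W$ is read ''$i$ is preferred over or tied with $j$''. The characteristic vector of $W$ is $x^W\in\{0,1\}^{A_N}$ with $x^W_{(i,j)}=1$ if $(i,j)\in W$ and $0$ otherwise. The weak order polytope $P^n_{WO}$ is the convex hull of the characteristic vectors of all weak orders on $N$; its points are vectors $x\in\mathbb{R}^{A_N}$ and $x_{ij}$ denotes the coordinate $x_{(i,j)}$. *)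

(* Defs.v *)
From mathcomp Require Import all_boot all_order all_algebra.
Set Implicit Arguments. Unset Strict Implicit. Unset Printing Implicit Defensive.
Import Order.TTheory GRing.Theory Num.Theory.
Local Open Scope ring_scope.

(* N = {1,...,n} is represented by 'I_n = {0,...,n-1}. *)

Definition weak_order (n : nat) (W : rel 'I_n) : Prop :=
  reflexive W /\ transitive W /\ total W.

(* Points of R^{A_N} are represented as functions x : 'I_n -> 'I_n -> R;
   only the off-diagonal entries x i j (i != j) are coordinates.
   x lies in the weak order polytope P^n_WO iff it is a convex combination
   of characteristic vectors of weak orders (on the coordinates in A_N). *)
Definition in_weak_order_polytope (R : realFieldType) (n : nat)
    (x : 'I_n -> 'I_n -> R) : Prop :=
  exists (k : nat) (lam : 'I_k -> R) (Ws : 'I_k -> rel 'I_n),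
    (forall t, weak_order (Ws t)) /\
    (forall t, 0 <= lam t) /\
    (\sum_(t < k) lam t = 1) /\
    (forall i j : 'I_n, i != j -> x i j = \sum_(t < k) lam t * (Ws t i j)%:R).

(* Main.v *)
Require Import Defs.
From mathcomp Require Import all_boot all_order all_algebra.
From mathcomp Require Import ring lra.
Import Order.TTheory GRing.Theory Num.Theory.
Local Open Scope ring_scope.

Lemma comb (R : realFieldType) (n : nat) (i1 i2 : 'I_n) (W : rel 'I_n) :
  (4 <= n)%N -> i1 != i2 -> weak_order W ->
  \sum_(j : 'I_n | (j != i1) && (j != i2))
     ((W i1 j)%:R + (W j i1)%:R + (W j i2)%:R : R)
    - (W i1 i2)%:R
    - \sum_(j : 'I_n | (j != i1) && (j != i2))
        \sum_(j' : 'I_n | [&& j' != i1, j' != i2 & j' != j]) (W j j')%:R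
  <= 3 - ((n%:R - 4) * (n%:R - 5)) / 2.
Proof.
move=> n4 ne [Wr [Wt Wtot]].
set c := fun j : 'I_n => (j != i1) && (j != i2).
set sb := fun j : 'I_n => [&& W i1 j, W j i1 & W j i2].
have Hm : \sum_(j | c j) (1 : R) = n%:R - 2.
  have e : \sum_(j : 'I_n) (1:R) = 1 + (1 + \sum_(j | c j) 1).
    rewrite (bigD1 i1) //= (bigD1 i2) /=; last by rewrite eq_sym.
    congr (_ + (_ + _)); apply: eq_bigl => j; by rewrite /c andbC.
  move: e; rewrite sumr_const card_ord => e.
  have -> : n%:R = (n%:R : R) by []. lra.
set m := n%:R - 2 in Hm.
set s := \sum_(j | c j) ((sb j : nat)%:R : R).
have H1 : \sum_(j | c j) ((W i1 j)%:R + (W j i1)%:R + (W j i2)%:R : R)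
           <= 2 * m + s.
  rewrite -Hm /s mulr_sumr -big_split /=; apply: ler_sum => j _.
  rewrite /sb; case: (W i1 j); case: (W j i1); case: (W j i2) => /=; lra.
have HP : \sum_(j | c j) \sum_(j' | [&& j' != i1, j' != i2 & j' != j]) ((W j j')%:R : R)
   = \sum_(j | c j) \sum_(j' | c j' && (j' != j)) ((W j j')%:R : R).
  by apply: eq_bigr => j _; apply: eq_bigl => j'; rewrite /c andbA.
rewrite HP; set P := \sum_(j | c j) _.
have H2 : P + P = \sum_(j | c j) \sum_(j' | c j' && (j' != j)) ((W j j')%:R + (W j' j)%:R : R).
  rewrite [in RHS](eq_bigr _ (fun j _ => big_split _ _ _ _ _)) /= big_split /=.
  congr (_ + _).
  rewrite /P (exchange_big_dep c) /=; last by move=> i j _ /andP[].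
  apply: eq_bigr => j cj; apply: eq_bigl => j'.
  by rewrite cj /= eq_sym.
have H3 : \sum_(j | c j) \sum_(j' | c j' && (j' != j)) ((W j j')%:R + (W j' j)%:R : R)
   >= \sum_(j | c j) \sum_(j' | c j' && (j' != j)) (1 + ((sb j : nat)%:R * (sb j' : nat)%:R) : R).
  apply: ler_sum => j _; apply: ler_sum => j' _.
  have -> : ((sb j : nat)%:R * (sb j' : nat)%:R : R) = ((sb j && sb j' : bool) : nat)%:R
    by rewrite -natrM mulnb.
  have [Hj|Hj] := boolP (sb j && sb j').
    move/andP: Hj => [/and3P[a b _] /and3P[d e _]].
    by rewrite (Wt _ _ _ b d) (Wt _ _ _ e a).

  have := Wtot j j'; case: (W j j'); case: (W j' j) => //= _; lra.
have H4 : \sum_(j | c j) \sum_(j' | c j' && (j' != j)) (1 + (sb j : nat)%:R * (sb j' : nat)%:R : R)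
   = m * (m - 1) + s * s - s.
  rewrite (eq_bigr (fun j => (m - 1) + ((sb j : nat)%:R * s - (sb j : nat)%:R))); last first.
    move=> j cj; rewrite big_split /= -mulr_sumr.
    have e1 : m = 1 + \sum_(j' | c j' && (j' != j)) (1:R) by rewrite -Hm (bigD1 j cj).
    have e2 : s = (sb j : nat)%:R + \sum_(j' | c j' && (j' != j)) ((sb j' : nat)%:R : R)
      by rewrite /s (bigD1 j cj).
    have -> : \sum_(j' | c j' && (j' != j)) (1:R) = m - 1 by rewrite e1; ring.
    have -> : \sum_(j' | c j' && (j' != j)) ((sb j' : nat)%:R : R) = s - (sb j : nat)%:R
      by rewrite e2; ring.
    by case: (sb j) => /=; ring.
  have Ea : \sum_(i | c i) (m - 1) = m * (m - 1).
    by rewrite -{2}Hm mulr_suml; apply: eq_bigr => *; rewrite mul1r.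
  have Eb : \sum_(i | c i) ((sb i : nat)%:R * s - (sb i : nat)%:R) = s * s - s.
    by rewrite sumrB -mulr_suml.
  rewrite big_split /= Ea Eb; ring.
have H5 : forall j, c j -> sb j -> W i1 i2.
  by move=> j _ /and3P[a b d]; exact: Wt _ _ _ a d.
have Hs : exists sn : nat, s = sn%:R by exists (\sum_(j | c j) sb j)%N; rewrite /s natr_sum.
case: Hs => sn Hsn.
have Hw : (0 < sn)%N -> W i1 i2.
  move=> sp; have : s != 0 by rewrite Hsn pnatr_eq0 -lt0n.
  rewrite /s; case: (boolP [exists j, c j && sb j]).
    by move=> /existsP[j /andP[cj sj]] _; exact: H5 j cj sj.
  move=> /existsPn Hn; rewrite big1 ?eqxx // => j cj.
  by move: (Hn j); rewrite cj /= => /negbTE ->.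
have Hn : (4%:R : R) <= n%:R by rewrite ler_nat.
rewrite /m in H4 H1.
rewrite Hsn in H4 H1.
case: sn Hsn Hw H4 H1 => [|k] Hsn Hw H4 H1.
  have : 0 <= ((W i1 i2 : nat)%:R : R) by [].
  move: H1 H2 H3 H4; set A := \sum_(j < n | _) _; set B := \sum_(j | c j) _; set Cc := \sum_(j | c j) _.
  move=> *; nra.
rewrite Hw // /=.
have Hk2 : 0 <= (k%:R : R) * (k%:R - 1).
  have G : forall k : nat, 0 <= (k%:R : R) * (k%:R - 1); last exact: G.
  case => [|k']; first by rewrite mul0r.
  apply: mulr_ge0 => //; rewrite -natr1 addrK ler0n //.
have Hk : 0 <= (k%:R : R) by [].
rewrite -natr1 in H4 H1.
move: H1 H2 H3 H4; set A := \sum_(j < n | _) _; set B := \sum_(j | c j) _; set Cc := \sum_(j | c j) _.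
move=> *; nra.
Qed.

Theorem mainTheorem6 (R : realFieldType) (n : nat) (i1 i2 : 'I_n)
    (x : 'I_n -> 'I_n -> R) :
  (4 <= n)%N -> i1 != i2 ->
  in_weak_order_polytope x ->
  \sum_(j : 'I_n | (j != i1) && (j != i2)) (x i1 j + x j i1 + x j i2)
    - x i1 i2
    - \sum_(j : 'I_n | (j != i1) && (j != i2))
        \sum_(j' : 'I_n | [&& j' != i1, j' != i2 & j' != j]) x j j'
  <= 3 - ((n%:R - 4) * (n%:R - 5)) / 2.
Proof.
move=> n4 ne [k [lam [Ws [Hw [Hl [Hs Hx]]]]]].
set B := 3 - _.
have E1 : \sum_(j : 'I_n | (j != i1) && (j != i2)) (x i1 j + x j i1 + x j i2)
  = \sum_(t < k) \sum_(j : 'I_n | (j != i1) && (j != i2))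
       (lam t * ((Ws t i1 j : nat)%:R + (Ws t j i1 : nat)%:R + (Ws t j i2 : nat)%:R)).
  rewrite exchange_big /=; apply: eq_bigr => j /andP[a b].
  rewrite !Hx ?(eq_sym i1) // -!big_split /=; apply: eq_bigr => t _; ring.
have E2 : \sum_(j : 'I_n | (j != i1) && (j != i2))
        \sum_(j' : 'I_n | [&& j' != i1, j' != i2 & j' != j]) x j j'
  = \sum_(t < k) \sum_(j : 'I_n | (j != i1) && (j != i2))
        \sum_(j' : 'I_n | [&& j' != i1, j' != i2 & j' != j]) (lam t * (Ws t j j' : nat)%:R).
  rewrite exchange_big /=; apply: eq_bigr => j _.
  rewrite exchange_big /=; apply: eq_bigr => j' /and3P[_ _ a].
  by rewrite Hx // eq_sym.
rewrite E1 E2 (Hx _ _ ne) -!sumrB.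
apply: le_trans (_ : \sum_(t < k) lam t * B <= B).
  apply: ler_sum => t _.
  rewrite -mulr_sumr.
  rewrite [X in _ - X <= _](eq_bigr (fun j => lam t * \sum_(j' : 'I_n | [&& j' != i1, j' != i2 & j' != j])
      ((Ws t j j' : nat)%:R : R))); last by move=> j _; rewrite mulr_sumr.
  rewrite -mulr_sumr -!mulrBr; apply: ler_wpM2l; first exact: Hl.
  exact: comb.
by rewrite -mulr_suml Hs mul1r.
Qed.
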